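(* Let $\tilde\beta\in(0,1)$. Consider the conditions (C2.1): there exist symmetric positive definite $Q^{(k)}\in\mathbb{R}^{\tilde n\times\tilde n}$, $k\in\{1,\dots,N\}$, $H\in\mathbb{R}^{n\times n}$ and $L\in\mathbb{R}^{m\times n}$ such that $S^{(k)}_{\rm qmi}(Q^{(k)},H,L,\tilde\beta)\succeq0$ for all $k$; (C2.2): there exist symmetric positive definite $Q^{(k)}$, $H$, $L$ such that $S^{(k)}_{\rm qmi}(Q^{(k)},H,L,1)\succ0$ for all $k$; and the conditions (C1.1): there exist symmetric positive definite $P^{(k)}\in\mathbb{R}^{\tilde n\times\tilde n}$, $G\in\mathbb{R}^{\tilde n\times\tilde n}$, $K\in\mathbb{R}^{m\times n}$ with $\begin{bmatrix}\tilde\beta^2P^{(k)} & \mathcal{C}(F^{(k)}(K))^\top G\\ G^\top\mathcal{C}(F^{(k)}(K)) & G^\top+G-P^{(k)}\end{bmatrix}\succeq0$ for all $k$; (C1.2): the same with $\tilde\beta$ replaced by $1$ and $\succeq$ replaced by $\succ$. Then (C2.1) implies (C1.1), and (C2.2) implies (C1.2), with the choices $$P^{(k)}=G^\top Q^{(k)}G,\qquad G=\mathcal{C}(H\otimes H)^{-1},\qquad K=LH^{-1}$$ (where these inverses exist). Furthermore, if the $Q^{(k)}$ are identical for all $k$, then the $P^{(k)}$ so defined are identical.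
   Context: Let $n,m,N$ be positive integers, $\tilde n=n(n+1)/2$. $\mathrm{vec}$ stacks columns; $\mathrm{vech}(X)$ stacks columnwise the entries on and below the diagonal. $E_e\in\mathbb{R}^{\tilde n\times n^2}$ satisfies $E_e\mathrm{vec}(X)=\mathrm{vech}(X)$ for all $X\in\mathbb{R}^{n\times n}$, $D\in\mathbb{R}^{n^2\times\tilde n}$ satisfies $D\mathrm{vech}(Y)=\mathrm{vec}(Y)$ for all symmetric $Y$, $\mathcal{C}(Y):=E_eYD$ for $Y\in\mathbb{R}^{n^2\times n^2}$. Let $M^{(1)},\dots,M^{(N)}\in\mathbb{R}^{n(n+m)\times n(n+m)}$ be symmetric (second-moment vertices of an SMP system), with blocks $M^{(k)}_{i,j}\in\mathbb{R}^{n\times n}$, $i,j\le n+m$. Column $n(j-1)+i$ of $F^{(k)}_{aa}\in\mathbb{R}^{n^2\times n^2}$ is $\mathrm{vec}(M^{(k)}_{i,j})$; column $m(j-1)+i'$ of $F^{(k)}_{ab}\in\mathbb{R}^{n^2\times nm}$ is $\mathrm{vec}(M^{(k)}_{n+i',j})$; column $n(j'-1)+i$ of $F^{(k)}_{ba}\in\mathbb{R}^{n^2\times nm}$ is $\mathrm{vec}(M^{(k)}_{i,n+j'})$; column $m(j'-1)+i'$ of $F^{(k)}_{bb}\in\mathbb{R}^{n^2\times m^2}$ is $\mathrm{vec}(M^{(k)}_{n+i',n+j'})$ ($i,j\le n$, $i',j'\le m$). $F^{(k)}(K):=F^{(k)}_{aa}-F^{(k)}_{ab}(I_n\otimes K)-F^{(k)}_{ba}(K\otimes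 I_n)+F^{(k)}_{bb}(K\otimes K)$. Define $F^{(k)}_{\rm qmi}(L,H):=\mathcal{C}\big(F^{(k)}_{aa}(H\otimes H)-F^{(k)}_{ab}(H\otimes L)-F^{(k)}_{ba}(L\otimes H)+F^{(k)}_{bb}(L\otimes L)\big)$ and $S^{(k)}_{\rm qmi}(Q,H,L,\tilde\beta):=\begin{bmatrix}\tilde\beta^2Q & F^{(k)}_{\rm qmi}(L,H)^\top\\ F^{(k)}_{\rm qmi}(L,H) & \mathcal{C}(H\otimes H)+\mathcal{C}(H\otimes H)^\top-Q\end{bmatrix}$ for symmetric $Q\in\mathbb{R}^{\tilde n\times\tilde n}$. *)

(* Defs.v *)
From HB Require Import structures.
From mathcomp Require Import all_boot all_order all_algebra.
From mathcomp Require Export mxtens.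
Set Implicit Arguments. Unset Strict Implicit. Unset Printing Implicit Defensive.
Import Order.TTheory GRing.Theory Num.Theory.
Local Open Scope ring_scope.

Section Defs.
Variable R : realFieldType.

Definition tn (n : nat) : nat := (n * n.+1) %/ 2.

(* Kronecker product A (x) B, with (i1,i2) |-> i1 * p + i2 (standard). *)
Definition kron {m1 n1 m2 n2} (A : 'M[R]_(m1, n1)) (B : 'M[R]_(m2, n2))
  : 'M[R]_(m1 * m2, n1 * n2) := tensmx A B.

(* vec: column stacking; entry (i,j) goes to (0-based) position j*n + i. *)
Definition vec {n} (X : 'M[R]_n) : 'cV[R]_(n * n) :=
  \col_k X (mxtens_unindex k).2 (mxtens_unindex k).1.

Definition vech {n} (X : 'M[R]_n) : 'cV[R]_(tn n) :=
  \col_(k < tn n)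
    nth 0 [seq X i j | j <- enum 'I_n, i <- filter (fun i : 'I_n => (j <= i)%N) (enum 'I_n)] k.

Definition elimination_mx {n} (Ee : 'M[R]_(tn n, n * n)) : Prop :=
  forall X : 'M[R]_n, Ee *m vec X = vech X.
Definition duplication_mx {n} (D : 'M[R]_(n * n, tn n)) : Prop :=
  forall Y : 'M[R]_n, Y^T = Y -> D *m vech Y = vec Y.

Definition Cop {n} (Ee : 'M[R]_(tn n, n * n)) (D : 'M[R]_(n * n, tn n))
  (Y : 'M[R]_(n * n)) : 'M[R]_(tn n) := Ee *m Y *m D.

Definition psd {p} (A : 'M[R]_p) : Prop :=
  A^T = A /\ forall x : 'cV[R]_p, 0 <= (x^T *m A *m x) 0 0.
Definition pd {p} (A : 'M[R]_p) : Prop :=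
  A^T = A /\ forall x : 'cV[R]_p, x != 0 -> 0 < (x^T *m A *m x) 0 0.

Section Blocks.
Variables n m : nat.
Variable M : 'M[R]_((n + m) * n).

(* n x n block (i,j), i,j < n+m (0-based) *)
Definition blk (i j : 'I_(n + m)) : 'M[R]_n :=
  \matrix_(a, b) M (mxtens_index (i, a)) (mxtens_index (j, b)).

(* column (0-based) j*n+i of Faa is vec(M_{i,j}) *)
Definition Faa : 'M[R]_(n * n, n * n) :=
  \matrix_(r, c) vec (blk (lshift m (mxtens_unindex c).2)
                          (lshift m (mxtens_unindex c).1)) r 0.
(* column j*m+i' of Fab is vec(M_{n+i',j}) *)
Definition Fab : 'M[R]_(n * n, n * m) :=
  \matrix_(r, c) vec (blk (rshift n (mxtens_unindex c).2)
                          (lshift m (mxtens_unindex c).1)) r 0.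
(* column j'*n+i of Fba is vec(M_{i,n+j'}) *)
Definition Fba : 'M[R]_(n * n, m * n) :=
  \matrix_(r, c) vec (blk (lshift m (mxtens_unindex c).2)
                          (rshift n (mxtens_unindex c).1)) r 0.
(* column j'*m+i' of Fbb is vec(M_{n+i',n+j'}) *)
Definition Fbb : 'M[R]_(n * n, m * m) :=
  \matrix_(r, c) vec (blk (rshift n (mxtens_unindex c).2)
                          (rshift n (mxtens_unindex c).1)) r 0.

Definition FK (K : 'M[R]_(m, n)) : 'M[R]_(n * n) :=
  Faa - Fab *m kron 1%:M K - Fba *m kron K 1%:M + Fbb *m kron K K.

Variables (Ee : 'M[R]_(tn n, n * n)) (D : 'M[R]_(n * n, tn n)).

Definition Fqmi (L : 'M[R]_(m, n)) (H : 'M[R]_n) : 'M[R]_(tn n) :=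
  Cop Ee D (Faa *m kron H H - Fab *m kron H L - Fba *m kron L H
            + Fbb *m kron L L).

Definition Sqmi (Q : 'M[R]_(tn n)) (H : 'M[R]_n) (L : 'M[R]_(m, n)) (beta : R)
  : 'M[R]_(tn n + tn n) :=
  block_mx (beta ^+ 2 *: Q) (Fqmi L H)^T
           (Fqmi L H) (Cop Ee D (kron H H) + (Cop Ee D (kron H H))^T - Q).

Definition S1 (P G : 'M[R]_(tn n)) (K : 'M[R]_(m, n)) (beta : R)
  : 'M[R]_(tn n + tn n) :=
  block_mx (beta ^+ 2 *: P) ((Cop Ee D (FK K))^T *m G)
           (G^T *m Cop Ee D (FK K)) (G^T + G - P).

End Blocks.
End Defs.

(* Main.v *)
Require Import Defs.
From HB Require Import structures.
From mathcomp Require Import all_boot all_order all_algebra.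
From mathcomp Require Import zify lra.
Set Implicit Arguments. Unset Strict Implicit. Unset Printing Implicit Defensive.
Import Order.TTheory GRing.Theory Num.Theory.
Local Open Scope ring_scope.

Lemma count_iota_geq (j n : nat) : count (fun x => (j <= x)%N) (iota 0 n) = (n - j)%N.
Proof.
elim: n => [//|n IH]; have -> : iota 0 n.+1 = iota 0 n ++ [:: n] by rewrite -addn1 iotaD.
rewrite count_cat IH /= addn0.
case: (leqP j n) => h; lia.
Qed.

Lemma sumn_tri n : (2 * sumn [seq (n - j)%N | j <- iota 0 n] = n * n.+1)%N.
Proof.
elim: n => [//|n IH].
have -> : iota 0 n.+1 = iota 0 n ++ [:: n] by rewrite -addn1 iotaD.
rewrite map_cat sumn_cat /=.
have -> : [seq (n.+1 - j)%N | j <- iota 0 n] = [seq (n - j).+1 | j <- iota 0 n].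
  apply/eq_in_map => j; rewrite mem_iota => /andP[_ h]; lia.
have -> : forall (f : nat -> nat) (s : seq nat), sumn [seq (f x).+1 | x <- s] = (sumn (map f s) + size s)%N.
  by move=> f; elim=> //= x s ->; lia.
rewrite size_iota subSnn addn0 mulnDr.
rewrite (_ : map (subn n) (iota 0 n) = [seq (n - j)%N | j <- iota 0 n]) // ; nia.
Qed.

Definition ps n : seq ('I_n * 'I_n) :=
  [seq (i, j) | j : 'I_n <- enum 'I_n, i <- filter (fun i : 'I_n => (j <= i)%N) (enum 'I_n)].

Lemma size_ps n : size (ps n) = tn n.
Proof.
rewrite /ps size_allpairs_dep.
have -> : [seq size (filter (fun i : 'I_n => (j <= i)%N) (enum 'I_n)) | j : 'I_n <- enum 'I_n]
   = [seq (n - j)%N | j <- map (@nat_of_ord n) (enum (ordinal n))].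
  rewrite -map_comp; apply: eq_map => j /=.
  by rewrite size_filter -count_iota_geq -val_enum_ord count_map.
by rewrite val_enum_ord /tn -sumn_tri mulKn.
Qed.

Lemma uniq_ps n : uniq (ps n).
Proof.
apply: allpairs_uniq_dep.
- exact: enum_uniq.
- by move=> j _; apply: filter_uniq; apply: enum_uniq.
- by move=> [j1 i1] [j2 i2] _ _ /= [-> ->].
Qed.

Lemma mem_ps n (p : 'I_n * 'I_n) : p \in ps n -> (p.2 <= p.1)%N.
Proof.
by move=> /allpairsPdep[j [i [_ + ->]]]; rewrite mem_filter => /andP[].
Qed.


Section M.
Variable R : realFieldType.

Lemma vechE n (X : 'M[R]_n) (k : 'I_(tn n)) :
  vech X k 0 = nth 0 [seq X p.1 p.2 | p <- ps n] k.
Proof. by rewrite mxE /ps map_allpairs. Qed.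

Lemma vech_surj n (z : 'cV[R]_(tn n)) : exists Y : 'M[R]_n, Y^T = Y /\ vech Y = z.
Proof.
case: n z => [|n] z.
  by exists 0; split; [rewrite trmx0 | apply/matrixP => -[k hk]].
pose pr (i j : 'I_n.+1) := if (j <= i)%N then (i, j) else (j, i).
pose zs := [seq z k 0 | k <- enum 'I_(tn n.+1)].
exists (\matrix_(i, j) nth 0 zs (index (pr i j) (ps n.+1))); split.
  apply/matrixP => i j; rewrite !mxE /pr.
  case: (ltngtP i j) => h //.
  by have -> : i = j by apply: val_inj.
apply/matrixP => k c; rewrite ord1 vechE.
have hk : (k < size (ps n.+1))%N by apply: (leq_trans (ltn_ord k)); rewrite size_ps.
rewrite (nth_map (ord0, ord0)) //.
set p := nth _ _ _.
have pin : p \in ps n.+1 by apply: mem_nth.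
have le := mem_ps pin.
rewrite mxE /pr le -surjective_pairing index_uniq //; last exact: uniq_ps.
rewrite /zs (nth_map k); last by rewrite size_enum_ord; rewrite size_ps in hk.
by rewrite nth_ord_enum.
Qed.

Lemma vec_inj n (X Y : 'M[R]_n) : vec X = vec Y -> X = Y.
Proof.
move=> e; apply/matrixP => i j.
have := congr1 (fun v : 'cV[R]_(n * n) => v (mxtens_index (j, i)) 0) e.
by rewrite !mxE mxtens_indexK.
Qed.

Lemma vec0 n : vec (0 : 'M[R]_n) = 0.
Proof. by apply/matrixP => i j; rewrite !mxE. Qed.

Lemma vec_kron n (A B X : 'M[R]_n) : kron A B *m vec X = vec (B *m X *m A^T).
Proof.
apply/matrixP => k c; rewrite ord1; case: (mxtens_indexP k) => j i.
rewrite /kron !mxE mxtens_indexK /=.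
rewrite (reindex (@mxtens_index n n)) /=; last first.
  by exists (@mxtens_unindex n n) => ? _; [apply: mxtens_indexK | apply: mxtens_unindexK].
symmetry; under eq_bigr => b _ do rewrite !mxE big_distrl /=.
rewrite pair_big /=; apply: eq_bigr => [[b a]] _.
rewrite !mxE !mxtens_indexK /=.
by rewrite mulrC mulrA [A _ _ * _]mulrC.
Qed.

Lemma mx_ext p q (X Y : 'M[R]_(p, q)) :
  (forall z : 'cV[R]_q, X *m z = Y *m z) -> X = Y.
Proof.
move=> h; apply/matrixP => i j.
have := congr1 (fun v : 'cV[R]_p => v i 0) (h (delta_mx j 0)).
by rewrite -!colE !mxE.
Qed.

End M.


Section Main.
Variable R : realFieldType.
Variables n m : nat.
Variable M : 'M[R]_((n + m) * n).
Variables (Ee : 'M[R]_(tn n, n * n)) (D : 'M[R]_(n * n, tn n)).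
Hypothesis hE : elimination_mx Ee.
Hypothesis hD : duplication_mx D.

Lemma DEe (H : 'M[R]_n) : D *m Ee *m kron H H *m D = kron H H *m D.
Proof.
apply: mx_ext => z; have [Y [sY <-]] := vech_surj z.
rewrite -!mulmxA hD // vec_kron hE hD //.
by rewrite !trmx_mul trmxK sY mulmxA.
Qed.

Lemma Fqmi_eq (H : 'M[R]_n) (L : 'M[R]_(m, n)) : H \in unitmx ->
  Fqmi M Ee D L H = Cop Ee D (FK M (L *m invmx H)) *m Cop Ee D (kron H H).
Proof.
move=> uH; rewrite /Cop.
have -> : Ee *m FK M (L *m invmx H) *m D *m (Ee *m kron H H *m D)
   = Ee *m (FK M (L *m invmx H) *m kron H H) *m D.
  by rewrite -[in RHS]mulmxA -[in RHS](mulmxA (FK M _)) -DEe !mulmxA.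
rewrite /Fqmi /Cop /FK; do 2 f_equal.
rewrite !mulmxDl !mulNmx -!mulmxA /kron !tensmx_mul mul1mx -mulmxA mulVmx // mulmx1; reflexivity.
Qed.

End Main.


Section Gen.
Variable R : realFieldType.

Lemma quad_tr p (A : 'M[R]_p) (x : 'cV[R]_p) :
  (x^T *m A^T *m x) 0 0 = (x^T *m A *m x) 0 0.
Proof.
have -> : x^T *m A^T *m x = (x^T *m A *m x)^T by rewrite !trmx_mul trmxK mulmxA.
by rewrite mxE.
Qed.

Lemma quad_cong p (T S : 'M[R]_p) (x : 'cV[R]_p) :
  x^T *m (T^T *m S *m T) *m x = (T *m x)^T *m S *m (T *m x).
Proof. by rewrite trmx_mul !mulmxA. Qed.

Lemma psd_cong p (T S : 'M[R]_p) : psd S -> psd (T^T *m S *m T).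
Proof.
move=> [sS hS]; split; first by rewrite !trmx_mul trmxK sS mulmxA.
by move=> x; rewrite quad_cong.
Qed.

Lemma pd_cong p (T S : 'M[R]_p) : T \in unitmx -> pd S -> pd (T^T *m S *m T).
Proof.
move=> uT [sS hS]; split; first by rewrite !trmx_mul trmxK sS mulmxA.
move=> x nx; rewrite quad_cong; apply: hS.
apply: contra nx => /eqP e; apply/eqP.
by rewrite -(mulKmx uT x) e mulmx0.
Qed.

Lemma posC p (C : 'M[R]_p) :
  (forall x : 'cV[R]_p, x != 0 -> 0 < (x^T *m C *m x) 0 0) -> C \in unitmx.
Proof.
move=> h; case uC: (C \in unitmx) => //; exfalso.
have /det0P [v nv vC] : \det C == 0.
  by move: uC; rewrite unitmxE unitfE => /negbT; rewrite negbK.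
have nx : v^T != 0 by apply: contra nv => /eqP e; rewrite -[v]trmxK e trmx0.
have := h _ nx; rewrite trmxK vC mul0mx mxE.
by rewrite ltxx.
Qed.

Lemma blockquad p (a b c d : 'M[R]_p) (x : 'cV[R]_p) :
  (col_mx 0 x)^T *m block_mx a b c d *m col_mx 0 x = x^T *m d *m x.
Proof.
rewrite tr_col_mx trmx0 mul_row_block !mul0mx !add0r mul_row_col mulmx0; exact: add0r.
Qed.

End Gen.


Section Main2.
Variable R : realFieldType.
Variables n m : nat.
Variable M : 'M[R]_((n + m) * n).
Variables (Ee : 'M[R]_(tn n, n * n)) (D : 'M[R]_(n * n, tn n)).
Hypothesis hE : elimination_mx Ee.
Hypothesis hD : duplication_mx D.

Lemma C_pos (Q : 'M[R]_(tn n)) H L beta :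
  pd Q -> (forall y : 'cV[R]_(tn n + tn n), 0 <= (y^T *m Sqmi M Ee D Q H L beta *m y) 0 0) ->
  forall x : 'cV[R]_(tn n), x != 0 ->
    0 < (x^T *m Cop Ee D (kron H H) *m x) 0 0.
Proof.
move=> [_ hQ] hS x nx.
have := hS (col_mx 0 x); rewrite /Sqmi blockquad.
have eA : forall A B : 'M[R]_1, (A + B) 0 0 = A 0 0 + B 0 0 by move=> *; rewrite mxE.
have eN : forall A : 'M[R]_1, (- A) 0 0 = - A 0 0 by move=> *; rewrite mxE.
rewrite !mulmxDr !mulmxN !mulmxDl !mulNmx !eA !eN quad_tr.
have := hQ x nx.
move: ((x^T *m Q *m x) 0 0) ((x^T *m Cop Ee D (kron H H) *m x) 0 0) => c q hq hh.
have : 0 < q + q by apply: (lt_le_trans hq); rewrite -subr_ge0.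
by rewrite -mulr2n pmulrn_lgt0.
Qed.

Lemma H_unit (H : 'M[R]_n) :
  (forall x : 'cV[R]_(tn n), x != 0 -> 0 < (x^T *m Cop Ee D (kron H H) *m x) 0 0) ->
  H \in unitmx.
Proof.
move=> hC; case uH: (H \in unitmx) => //; exfalso.
have /det0P [v nv vH] : \det H^T == 0.
  by move: uH; rewrite -unitmx_tr unitmxE unitfE => /negbT; rewrite negbK.
set w := v^T.
have Hw : H *m w = 0 by rewrite /w -[H]trmxK -trmx_mul vH trmx0.
set Y := w *m w^T.
have sY : Y^T = Y by rewrite /Y trmx_mul trmxK.
have Cz : Cop Ee D (kron H H) *m vech Y = 0.
  rewrite /Cop -mulmxA hD // -mulmxA vec_kron /Y mulmxA Hw !mul0mx vec0.
  by rewrite mulmx0.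
have z0 : vech Y = 0.
  apply/eqP; case: eqP => // /eqP nz; have := hC _ nz.
  by rewrite -mulmxA Cz mulmx0 mxE ltxx.
have Y0 : Y = 0.
  by apply: vec_inj; rewrite vec0 -hD // z0 mulmx0.
have [i wi] : exists i, w i 0 != 0.
  case/boolP: [exists i, w i 0 != 0] => [/existsP//|/existsPn hw].
  exfalso; move/negP: nv; apply; apply/eqP.
  rewrite -[v]trmxK -/w; apply/matrixP => a b.
  by move: (hw b); rewrite negbK /w mxE trmxK (ord1 a) mxE => /eqP.
have := congr1 (fun X : 'M[R]_n => X i i) Y0.
rewrite /Y !mxE big_ord1 !mxE => /eqP.
by rewrite mulf_eq0 orbb; move: wi; rewrite /w mxE => /negbTE ->.
Qed.

Lemma S1_eq (Q : 'M[R]_(tn n)) (H : 'M[R]_n) (L : 'M[R]_(m, n)) beta :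
  H \in unitmx -> Cop Ee D (kron H H) \in unitmx ->
  let G := invmx (Cop Ee D (kron H H)) in
  S1 M Ee D (G^T *m Q *m G) G (L *m invmx H) beta =
  (block_mx G 0 0 G)^T *m Sqmi M Ee D Q H L beta *m block_mx G 0 0 G.
Proof.
move=> uH uC G.
rewrite /S1 /Sqmi tr_block_mx !trmx0 !mulmx_block !mul0mx !mulmx0 !addr0 !add0r.
rewrite Fqmi_eq //.
set C := Cop Ee D (kron H H).
set F := Cop Ee D (FK M _).
have CG : C *m G = 1%:M by rewrite mulmxV.
congr block_mx.
- by rewrite scalemxAl scalemxAr.
- by rewrite [(F *m C)^T]trmx_mul mulmxA -[G^T *m C^T]trmx_mul CG trmx1 mul1mx.
- by rewrite -mulmxA -(mulmxA _ C) CG mulmx1.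
- rewrite !mulmxDr !mulmxN !mulmxDl !mulNmx.
  have e1 : G^T *m C *m G = G^T by rewrite -mulmxA CG mulmx1.
  have e2 : G^T *m C^T *m G = G by rewrite -trmx_mul CG trmx1 mul1mx.
  by rewrite e1 e2.
Qed.

End Main2.

Lemma blk_unit (R : realFieldType) p (G : 'M[R]_p) : G \in unitmx -> block_mx G 0 0 G \in unitmx.
Proof.
move=> uG.
have : block_mx G 0 0 G *m block_mx (invmx G) 0 0 (invmx G) = 1%:M.
  by rewrite mulmx_block !mul0mx !mulmx0 !addr0 !add0r mulmxV // -scalar_mx_block.
by case/mulmx1_unit.
Qed.


Theorem theorem7 (R : realFieldType) (n m N : nat)
  (Ee : 'M[R]_(tn n, n * n)) (D : 'M[R]_(n * n, tn n))
  (M : 'I_N -> 'M[R]_((n + m) * n)) (beta : R) :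
  (0 < n)%N -> (0 < m)%N -> (0 < N)%N ->
  elimination_mx Ee -> duplication_mx D ->
  (forall k, (M k)^T = M k) ->
  0 < beta < 1 ->
  (* (C2.1) => (C1.1) with the given choices *)
  (forall (Q : 'I_N -> 'M[R]_(tn n)) (H : 'M[R]_n) (L : 'M[R]_(m, n)),
     (forall k, pd (Q k)) ->
     (forall k, psd (Sqmi (M k) Ee D (Q k) H L beta)) ->
     let G := invmx (Cop Ee D (kron H H)) in
     let K := L *m invmx H in
     let P := fun k => G^T *m Q k *m G in
     [/\ Cop Ee D (kron H H) \in unitmx, H \in unitmx,
         forall k, pd (P k) &
         forall k, psd (S1 (M k) Ee D (P k) G K beta)]) /\
  (* (C2.2) => (C1.2) with the given choices *)
  (forall (Q : 'I_N -> 'M[R]_(tn n)) (H : 'M[R]_n) (L : 'M[R]_(m, n)),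
     (forall k, pd (Q k)) ->
     (forall k, pd (Sqmi (M k) Ee D (Q k) H L 1)) ->
     let G := invmx (Cop Ee D (kron H H)) in
     let K := L *m invmx H in
     let P := fun k => G^T *m Q k *m G in
     [/\ Cop Ee D (kron H H) \in unitmx, H \in unitmx,
         forall k, pd (P k) &
         forall k, pd (S1 (M k) Ee D (P k) G K 1)]) /\
  (* identical Q^(k) give identical P^(k) *)
  (forall (Q : 'I_N -> 'M[R]_(tn n)) (H : 'M[R]_n),
     (forall k l, Q k = Q l) ->
     let G := invmx (Cop Ee D (kron H H)) in
     let P := fun k => G^T *m Q k *m G in
     forall k l, P k = P l).
Proof.
move=> hn hm hN hE hD hM hb.
pose k0 : 'I_N := Ordinal hN.
split; [|split].
- move=> Q H L hQ hS G K P.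
  have cpos := C_pos (hQ k0) (fun y => (hS k0).2 y).
  have uC := posC cpos.
  have uH := H_unit hD cpos.
  have uG : G \in unitmx by rewrite unitmx_inv.
  split => // k; first exact: pd_cong.
  rewrite /P /K /G S1_eq //; apply: psd_cong; exact: hS.
- move=> Q H L hQ hS G K P.
  have hS' : forall y : 'cV[R]_(tn n + tn n), 0 <= (y^T *m Sqmi (M k0) Ee D (Q k0) H L 1 *m y) 0 0.
    move=> y; case: (eqVneq y 0) => [->|ny]; first by rewrite mulmx0 mxE.
    exact: ltW ((hS k0).2 y ny).
  have cpos := C_pos (hQ k0) hS'.
  have uC := posC cpos.
  have uH := H_unit hD cpos.
  have uG : G \in unitmx by rewrite unitmx_inv.
  split => // k; first exact: pd_cong.
  rewrite /P /K /G S1_eq //; apply: pd_cong; [exact: blk_unit | exact: hS].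
- by move=> Q H hQ G P k l; rewrite /P (hQ k l).
Qed.
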